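(* Let $G$ be a connected simple graph with maximum degree at most $3$ and minimum degree at least $2$, in which no two adjacent vertices both have degree $3$. Let $M_1,M_2$ be disjoint matchings of $G$ such that $|M_1\cup M_2|$ is maximum over all pairs of disjoint matchings, and, subject to this, such that the graph $G_{M_1,M_2}$ has the minimum number of connected components. Then each connected component of $G_{M_1,M_2}$ is a path $P_2$ or a path $P_3$, and if a component is a $P_3$, then its middle vertex has degree $2$ in $G$.
   Context: $G_{M_1,M_2}$ denotes the subgraph of $G$ induced by the edge set $E(G)\setminus(M_1\cup M_2)$ (its vertices are the endpoints of these edges). $P_k$ denotes a path on $k$ vertices. *)

(* Defs.v *)
From mathcomp Require Import all_boot.
Set Implicit Arguments. Unset Strict Implicit. Unset Printing Implicit Defensive.

(* A simple graph: vertex type T (finite), adjacency e : rel T,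
   assumed symmetric and irreflexive.  Edges are 2-element vertex sets. *)
Section Graph.
Variables (T : finType) (e : rel T).

Definition simple_graph := symmetric e /\ irreflexive e.

Definition edges : {set {set T}} :=
  [set u : {set T} | [exists x, exists y, e x y && (u == [set x; y])]].

Definition deg (x : T) : nat := #|[set y | e x y]|.

Definition connected_graph := forall x y : T, connect e x y.

Definition matching (M : {set {set T}}) :=
  M \subset edges /\
  forall u v, u \in M -> v \in M -> u != v -> [disjoint u & v].

(* Edge set of G_{M1,M2}. *)
Definition rest_edges (M1 M2 : {set {set T}}) : {set {set T}} :=
  edges :\: (M1 :|: M2).

Definition rest_rel (M1 M2 : {set {set T}}) : rel T :=
  fun x y => [set x; y] \in rest_edges M1 M2.

(* Vertex set of G_{M1,M2}: endpoints of its edges. *)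
Definition rest_verts (M1 M2 : {set {set T}}) : {set T} :=
  [set x | [exists y, rest_rel M1 M2 x y]].

Definition rest_comps (M1 M2 : {set {set T}}) : {set {set T}} :=
  [set [set y | connect (rest_rel M1 M2) x y] | x in rest_verts M1 M2].

Definition ncomp (M1 M2 : {set {set T}}) : nat := #|rest_comps M1 M2|.

Definition comp_edges (M1 M2 : {set {set T}}) (C : {set T}) : {set {set T}} :=
  [set u in rest_edges M1 M2 | u \subset C].

Definition path_edges (s : seq T) : {set {set T}} :=
  [set u | u \in [seq [set p.1; p.2] | p <- zip s (behead s)]].

Definition is_path_comp (M1 M2 : {set {set T}}) (C : {set T}) (s : seq T) :=
  [/\ uniq s, C = [set x | x \in s] & comp_edges M1 M2 C = path_edges s].

Definition disjoint_matchings (M1 M2 : {set {set T}}) :=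
  [/\ matching M1, matching M2 & [disjoint M1 & M2]].

Definition optimal_pair (M1 M2 : {set {set T}}) :=
  [/\ disjoint_matchings M1 M2,
      (forall N1 N2, disjoint_matchings N1 N2 -> #|N1 :|: N2| <= #|M1 :|: M2|)
    & (forall N1 N2, disjoint_matchings N1 N2 ->
         #|N1 :|: N2| = #|M1 :|: M2| -> ncomp M1 M2 <= ncomp N1 N2)].

End Graph.

(* Main.v *)
Require Import Defs.
From mathcomp Require Import all_boot zify.
Set Implicit Arguments. Unset Strict Implicit. Unset Printing Implicit Defensive.


Section Prelim.
Variables (T : finType) (e : rel T).
Hypothesis esym : symmetric e.
Hypothesis eirr : irreflexive e.

Definition cnt (F : {set {set T}}) x := #|[set a in F | x \in a]|.

Lemma edgesP a : reflect (exists x y, e x y /\ a = [set x; y]) (a \in edges e).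
Proof.
rewrite inE; apply: (iffP existsP) => [[x /existsP [y /andP [exy /eqP ->]]]|[x [y [exy ->]]]].
  by exists x, y.
by exists x; apply/existsP; exists y; rewrite exy eqxx.
Qed.

Lemma set2_eq (x y p q : T) : [set x; y] = [set p; q] -> p != q ->
  (x = p /\ y = q) \/ (x = q /\ y = p).
Proof.
move=> E npq.
have hx : x \in [set p; q] by rewrite -E !inE eqxx.
have hy : y \in [set p; q] by rewrite -E !inE eqxx orbT.
have hp : p \in [set x; y] by rewrite E !inE eqxx.
have hq : q \in [set x; y] by rewrite E !inE eqxx orbT.
move: hx hy hp hq; rewrite !inE.
case/orP=> /eqP hx; case/orP=> /eqP hy; subst => //; try by [left|right].
- by rewrite orbb eq_sym (negbTE npq).
- by rewrite orbb (negbTE npq).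
Qed.

Lemma edge2 x y : ([set x; y] \in edges e) = e x y.
Proof.
apply/edgesP/idP => [[p [q [epq E]]]|exy]; last by exists x, y.
have npq : p != q by apply/eqP=> pq; subst; rewrite eirr in epq.
by case: (set2_eq E npq) => -[-> ->] //; rewrite esym.
Qed.

Lemma card_edge a : a \in edges e -> #|a| = 2.
Proof.
case/edgesP=> p [q [epq ->]]; rewrite cards2.
by case: eqP epq => // ->; rewrite eirr.
Qed.

Lemma cnt_nbr (F : {set {set T}}) x : F \subset edges e -> cnt F x = #|[set y | [set x; y] \in F]|.
Proof.
move=> sF; rewrite /cnt.
have inj : injective (fun y : T => [set x; y]).
  move=> y y' E.
  have : y \in [set x; y'] by rewrite -E !inE eqxx orbT.
  rewrite !inE => /orP [/eqP yx|/eqP //].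
  rewrite yx in E *; have : y' \in [set x; x] by rewrite E !inE eqxx orbT.
  by rewrite !inE orbb => /eqP.
rewrite -(card_imset _ inj); apply: eq_card => a; rewrite !inE.
apply/andP/imsetP; last first.
  by case=> y; rewrite inE => yF ->; rewrite yF !inE eqxx.
case=> aF xa.
have := subsetP sF a aF; case/edgesP=> p [q [epq ea]]; subst a.
move: xa; rewrite !inE => /orP [/eqP ->|/eqP ->]; first by exists q; rewrite ?inE.
by exists p; rewrite ?inE setUC.
Qed.

Lemma deg_cnt x : deg e x = cnt (edges e) x.
Proof.
rewrite cnt_nbr // /deg; apply: eq_card => y; by rewrite !inE -edge2 inE.
Qed.

Lemma cntU (F1 F2 : {set {set T}}) x : [disjoint F1 & F2] -> cnt (F1 :|: F2) x = cnt F1 x + cnt F2 x.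
Proof.
move=> d; rewrite /cnt -cardsUI.
have -> : [set a in F1 | x \in a] :&: [set a in F2 | x \in a] = set0.
  apply/setP=> a; rewrite !inE; apply/negbTE; apply/negP=> /and3P[/andP[h1 _] h2 _].
  by move: d => /disjoint_setI0 /setP /(_ a); rewrite !inE h1 h2.
rewrite cards0 addn0; apply: eq_card => a; rewrite !inE; by case: (a \in F1); case: (a \in F2); case: (x \in a).
Qed.

Lemma cnt_match (M : {set {set T}}) x : matching e M -> cnt M x <= 1.
Proof.
case=> _ hM; rewrite leqNgt; apply/negP=> /card_gt1P [a [b [ha hb nab]]].
move: ha hb; rewrite !inE => /andP [aM xa] /andP [bM xb].
by move: (hM a b aM bM nab) => /disjointFr /(_ xa); rewrite xb.
Qed.

End Prelim.

Lemma disjP (T : finType) (A B : {set T}) :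
  reflect (forall x, x \in A -> x \in B -> False) [disjoint A & B].
Proof.
rewrite disjoint_subset; apply: (iffP subsetP) => [h x xA xB|h x xA].
  by move: (h x xA); rewrite inE xB.
by rewrite inE; apply/negP => /(h x xA).
Qed.

Section Alt.
Variable (T : finType).

Lemma cnt_D1 (E : {set {set T}}) a0 t :
  a0 \in E -> cnt E t = (t \in a0) + cnt (E :\ a0) t.
Proof.
move=> a0E; rewrite /cnt (cardsD1 a0 [set a in E | t \in a]) !inE a0E /=.
congr (_ + _); apply: eq_card => b; rewrite !inE; by case: (b == a0); case: (b \in E).
Qed.

Lemma cnt_uniq (E : {set {set T}}) v : cnt E v = 1 -> exists a0, 
  [/\ a0 \in E, v \in a0 & forall b, b \in E -> v \in b -> b = a0].
Proof.
move/eqP/cards1P=> [a0 h]; exists a0.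
have : a0 \in [set a in E | v \in a] by rewrite h inE.
rewrite inE => /andP [-> ->]; split=> // b bE vb.
have : b \in [set a in E | v \in a] by rewrite inE bE vb.
by rewrite h inE => /eqP.
Qed.

Lemma alt_comp n (E : {set {set T}}) : #|E| <= n ->
  (forall a, a \in E -> #|a| = 2) -> (forall x, cnt E x <= 2) ->
  forall v, cnt E v = 1 -> exists S : {set T},
  [/\ v \in S, (forall a, a \in E -> a \subset S \/ [disjoint a & S]) &
      forall x z, x \in S -> z \in S -> x != v -> z != v ->
        cnt E x = 1 -> cnt E z = 1 -> x = z].
Proof.
elim: n E => [|n IH] E hn h2 hdeg v hv.
  have : cnt E v <= #|E|.
    by rewrite /cnt; apply: subset_leq_card; apply/subsetP => a; rewrite inE => /andP[].
  by rewrite hv; move=> h; move: (leq_trans h hn).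
have [a0 [a0E va0 ua0]] := cnt_uniq hv.
have [y [vy ea0]] : exists y, v != y /\ a0 = [set v; y].
  move: (h2 _ a0E) => /eqP /cards2P [p [q [npq ea]]].
  move: va0; rewrite ea !inE => /orP [/eqP ->|/eqP ->]; first by exists q.
  by exists p; rewrite eq_sym setUC.
have ya0 : y \in a0 by rewrite ea0 !inE eqxx orbT.
case: (eqVneq (cnt E y) 1) => hy.
  have [a1 [a1E ya1 ua1]] := cnt_uniq hy.
  have a10 : a1 = a0 by rewrite (ua1 a0).
  exists [set v; y]; split.
  - by rewrite !inE eqxx.
  - move=> b bE; case: (boolP (v \in b)) => vb.
      by left; rewrite (ua0 b) // ea0.
    case: (boolP (y \in b)) => yb.
      by left; rewrite (ua1 b) // a10 ea0.
    right; apply/disjP=> t tb; rewrite !inE => /orP [/eqP ht|/eqP ht]; subst t.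
      by rewrite tb in vb.
    by rewrite tb in yb.
  - move=> x z; rewrite !inE => /orP [/eqP->|/eqP->]; first by rewrite eqxx.
    move=> /orP [/eqP->|/eqP-> //]; by rewrite eqxx.
pose E' := E :\ a0.
have cE := cnt_D1 _ a0E.
have hy2 : cnt E y = 2.
  have := hdeg y; rewrite (cE y) ya0 /=.
  move: hy; rewrite (cE y) ya0 /= add1n eqSS.
  by case: (cnt E' y) => [|[|]].
have hy' : cnt E' y = 1 by move: hy2; rewrite (cE y) ya0 /= add1n => -[].
have [|||S' [yS' clS' uS']] := IH E' _ _ _ y hy'.
- by move: hn; rewrite (cardsD1 a0 E) a0E.
- by move=> a; rewrite inE => /andP [_ /h2].
- by move=> x; apply: leq_trans (hdeg x); rewrite (cE x) leq_addl.
exists (v |: S'); split.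
- by rewrite !inE eqxx.
- move=> b bE; case: (eqVneq b a0) => [->|ba0].
    by left; rewrite ea0; apply/subsetP=> t; rewrite !inE => /orP [->|/eqP->] //; rewrite yS' orbT.
  have bE' : b \in E' by rewrite !inE ba0 bE.
  case: (clS' b bE') => [sb|db].
    by left; apply: subset_trans sb (subsetUr _ _).
  right; apply/disjP=> t tb; rewrite !inE => /orP [/eqP ht|tS].
    by move: ba0; rewrite (ua0 b bE) ?eqxx // -ht.
  by move/disjP: db => /(_ t tb tS).
- have key : forall x, x \in v |: S' -> x != v -> cnt E x = 1 -> x \in S' /\ cnt E' x = 1.
    move=> x; rewrite !inE => /orP [/eqP -> |xS]; first by rewrite eqxx.
    move=> xv hx; split=> //.
    have xa0 : x \notin a0.
      rewrite ea0 !inE negb_or xv /=; apply/eqP=> xy; subst x.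
      by rewrite hy2 in hx.
    by move: hx; rewrite (cE x) (negbTE xa0).
  move=> x z xS zS xv zv hx hz.
  have [xS' hx'] := key x xS xv hx.
  have [zS' hz'] := key z zS zv hz.
  apply: uS' => //.
  + by apply/eqP=> xy; subst x; rewrite hy' in hx'; move: hx; rewrite hy2.
  + by apply/eqP=> xy; subst z; move: hz; rewrite hy2.
Qed.

End Alt.

Section Swap.
Variables (T : finType) (e : rel T).
Hypothesis esym : symmetric e.
Hypothesis eirr : irreflexive e.

Lemma cnt0 (X : {set {set T}}) x a : cnt X x = 0 -> a \in X -> x \in a -> False.
Proof.
move=> /eqP; rewrite cards_eq0 => /eqP /setP /(_ a); rewrite !inE => h aX xa.
by rewrite aX xa in h.
Qed.

Lemma match_sub (X Y : {set {set T}}) : matching e X -> Y \subset X -> matching e Y.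
Proof.
case=> sX hX sYX; split; first by apply: subset_trans sYX sX.
by move=> a b aY bY; apply: hX; apply: (subsetP sYX).
Qed.

Lemma match_union (X Y : {set {set T}}) : matching e X -> matching e Y ->
  (forall a b, a \in X -> b \in Y -> [disjoint a & b]) -> matching e (X :|: Y).
Proof.
case=> sX hX [sY hY] hXY; split; first by rewrite subUset sX sY.
move=> a b; rewrite !inE => /orP [aX|aY] /orP [bX|bY] nab.
- exact: hX.
- exact: hXY.
- by rewrite disjoint_sym; apply: hXY.
- exact: hY.
Qed.

Lemma swap_aug (A B : {set {set T}}) (S : {set T}) v u :
  disjoint_matchings e A B ->
  (forall a, a \in A :|: B -> a \subset S \/ [disjoint a & S]) ->
  v \in S -> u \notin S -> cnt B v = 0 -> cnt A u = 0 -> e v u ->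
  [set v; u] \notin A :|: B ->
  exists N1 N2, disjoint_matchings e N1 N2 /\ #|N1 :|: N2| = #|A :|: B|.+1.
Proof.
move=> [mA mB dAB] cl vS uS Bv Au evu vuAB.
pose ES := [set a : {set T} | a \subset S].
have out : forall a, a \in A :|: B -> ~~ (a \subset S) -> forall x, x \in a -> x \in S -> False.
  move=> a aAB naS x xa xS; case: (cl a aAB) => [h|h]; first by rewrite h in naS.
  by move/disjP: h => /(_ x xa xS).
pose N1 := ((A :\: ES) :|: (B :&: ES)) :|: [set [set v; u]].
pose N2 := (B :\: ES) :|: (A :&: ES).
have mN1' : matching e ((A :\: ES) :|: (B :&: ES)).
  apply: match_union.
  - by apply: match_sub mA _; apply: subsetDl.
  - by apply: match_sub mB _; apply: subsetIl.
  move=> a b; rewrite !inE => /andP [naS aA] /andP [bB bS].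
  apply/disjP=> x xa xb.
  by apply: (out a _ naS x xa); [rewrite inE aA | apply: (subsetP bS)].
have mN2 : matching e N2.
  apply: match_union.
  - by apply: match_sub mB _; apply: subsetDl.
  - by apply: match_sub mA _; apply: subsetIl.
  move=> a b; rewrite !inE => /andP [naS aB] /andP [bA bS].
  apply/disjP=> x xa xb.
  by apply: (out a _ naS x xa); [rewrite inE aB orbT | apply: (subsetP bS)].
have mN1 : matching e N1.
  apply: match_union => //.
    split; first by apply/subsetP=> a; rewrite inE => /eqP ->; rewrite edge2.
    by move=> a b; rewrite !inE => /eqP -> /eqP ->; rewrite eqxx.
  move=> a b; rewrite !inE => /orP [/andP [naS aA]|/andP [aB aS]] /eqP ->;
    apply/disjP=> x xa; rewrite !inE => /orP [/eqP xv|/eqP xu]; subst x.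
  - by apply: (out a _ naS v xa vS); rewrite inE aA.
  - by apply: (cnt0 Au aA xa).
  - by apply: (cnt0 Bv aB xa).
  - by move: uS; rewrite (subsetP aS _ xa).
exists N1, N2; split; first split=> //.
  apply/disjP=> a; rewrite !inE.
  move/disjP: dAB => dAB.
  case/orP=> [/orP [/andP [naS aA]|/andP [aB aS]]|/eqP ea].
  - case/orP=> /andP [_ h] //; last by rewrite h in naS.
    by apply: (dAB a).
  - case/orP=> /andP [h _] //; first by rewrite aS in h.
    by apply: (dAB a).
  - move=> h; move: vuAB; rewrite -ea !inE; case/orP: h => /andP [h1 h2]; by rewrite ?h1 ?h2 ?orbT.
rewrite (_ : N1 :|: N2 = [set v; u] |: (A :|: B)).
  by rewrite cardsU1 vuAB.
apply/setP=> a; rewrite !inE.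
case: (a == [set v; u]); rewrite ?orbT //=.
by case: (a \in A); case: (a \in B); case: (a \subset S).
Qed.

End Swap.

Section Pair.
Variables (T : finType) (e : rel T).
Hypothesis esym : symmetric e.
Hypothesis eirr : irreflexive e.
Variables (A B : {set {set T}}).
Hypothesis dAB : disjoint_matchings e A B.
Hypothesis mx : forall N1 N2, disjoint_matchings e N1 N2 -> #|N1 :|: N2| <= #|A :|: B|.

Lemma restP x y : rest_rel e A B x y = ([set x; y] \notin A :|: B) && e x y.
Proof. by rewrite /rest_rel /rest_edges in_setD (edge2 esym eirr). Qed.

Lemma rest_e x y : rest_rel e A B x y -> e x y.
Proof. by rewrite restP => /andP []. Qed.

Lemma match1 x y : e x y -> matching e [set [set x; y]].
Proof.
move=> exy; split; first by apply/subsetP=> a; rewrite inE => /eqP ->; rewrite edge2.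
by move=> a b; rewrite !inE => /eqP -> /eqP ->; rewrite eqxx.
Qed.

Lemma aug1 x y : rest_rel e A B x y -> cnt A x = 0 -> cnt A y = 0 -> False.
Proof.
rewrite restP => /andP [nAB exy] Ax Ay.
case: dAB => mA mB dab.
have m1 : matching e ([set [set x; y]] :|: A).
  apply: match_union => //; first exact: match1.
  move=> a b; rewrite inE => /eqP -> bA; apply/disjP=> t; rewrite !inE.
  by case/orP=> /eqP -> tb; [apply: (cnt0 Ax bA tb)|apply: (cnt0 Ay bA tb)].
have := mx (N1 := [set [set x; y]] :|: A) (N2 := B).
rewrite -setUA cardsU1 nAB ltnn => h; apply: notF; apply: h; split => //.
apply/disjP=> a; rewrite !inE => /orP [/eqP ->|aA] aB.
  by move: nAB; rewrite !inE aB orbT.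
by move/disjP: dab => /(_ a aA aB).
Qed.

Lemma alt_contra v u w : u != w -> rest_rel e A B v u -> rest_rel e A B v w ->
  cnt A v = 1 -> cnt B v = 0 -> cnt A u = 0 -> cnt B u = 1 ->
  cnt A w = 0 -> cnt B w = 1 -> False.
Proof.
move=> uw Rvu Rvw Av Bv Au Bu Aw Bw.
case: dAB => mA mB dab.
have cE : forall x, cnt (A :|: B) x = cnt A x + cnt B x by move=> x; apply: cntU.
have hdeg : forall x, cnt (A :|: B) x <= 2.
  by move=> x; rewrite cE; exact: leq_add (cnt_match x mA) (cnt_match x mB).
have hv : cnt (A :|: B) v = 1 by rewrite cE Av Bv.
have sE : A :|: B \subset edges e by rewrite subUset mA.1 mB.1.
have [S [vS clS uS]] := @alt_comp _ #|A :|: B| (A :|: B) (leqnn _)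
   (fun a h => card_edge eirr (subsetP sE a h))
   hdeg v hv.
have evu := rest_e Rvu; have evw := rest_e Rvw.
have nvu : u != v by apply/eqP=> h; subst u; rewrite eirr in evu.
have nvw : w != v by apply/eqP=> h; subst w; rewrite eirr in evw.
have [t [tS Rvt At]] : exists t, [/\ t \notin S, rest_rel e A B v t & cnt A t = 0].
  case: (boolP (u \in S)) => uin; last by exists u.
  case: (boolP (w \in S)) => win; last by exists w.
  by move: uw; rewrite (uS u w) ?eqxx // ?cE ?Au ?Bu ?Aw ?Bw.
move: Rvt; rewrite restP => /andP [nAB evt].
have [N1 [N2 [dN hN]]] := swap_aug esym eirr dAB clS vS tS Bv At evt nAB.
by have := mx dN; rewrite hN ltnn.
Qed.
End Pair.

Section Main.
Variables (T : finType) (e : rel T) (M1 M2 : {set {set T}}).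
Hypothesis esym : symmetric e.
Hypothesis eirr : irreflexive e.
Hypothesis hdeg3 : forall x, deg e x <= 3.
Hypothesis hdeg2 : forall x, 2 <= deg e x.
Hypothesis h33 : forall x y, e x y -> ~ (deg e x = 3 /\ deg e y = 3).
Hypothesis dm : disjoint_matchings e M1 M2.
Hypothesis mx : forall N1 N2, disjoint_matchings e N1 N2 -> #|N1 :|: N2| <= #|M1 :|: M2|.

Local Notation R := (rest_rel e M1 M2).
Local Notation hd := (cnt (rest_edges e M1 M2)).

Lemma m1 : matching e M1. Proof. by case: dm. Qed.
Lemma m2 : matching e M2. Proof. by case: dm. Qed.

Lemma dm' : disjoint_matchings e M2 M1.
Proof. by case: dm => a b c; split => //; rewrite disjoint_sym. Qed.

Lemma mx' N1 N2 : disjoint_matchings e N1 N2 -> #|N1 :|: N2| <= #|M2 :|: M1|.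
Proof. by rewrite [M2 :|: M1]setUC; apply: mx. Qed.

Lemma Rswap x y : rest_rel e M2 M1 x y = R x y.
Proof. by rewrite /rest_rel /rest_edges [M2 :|: M1]setUC. Qed.

Lemma Rsym x y : R x y = R y x.
Proof. by rewrite /rest_rel [[set x; y]]setUC. Qed.

Lemma hdR x : hd x = #|[set y | R x y]|.
Proof. by rewrite (@cnt_nbr _ e) //; apply: subsetDl. Qed.

Lemma hd_pos x y : R x y -> 0 < hd x.
Proof. by move=> h; rewrite hdR; apply/card_gt0P; exists y; rewrite inE. Qed.

Lemma L_deg x : deg e x = cnt M1 x + cnt M2 x + hd x.
Proof.
case: dm => m1 m2 d12.
rewrite (deg_cnt esym eirr) -cntU //.
  rewrite -cntU //.
  congr cnt; apply/setP=> a; rewrite /rest_edges; set Ed := edges e; rewrite !inE.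
  have := subsetP m1.1 a; have := subsetP m2.1 a.
  by case: (a \in M1); case: (a \in M2) => /= h2 h1; by [have := h1 isT; rewrite inE | have := h2 isT; rewrite inE | ].
rewrite /rest_edges; apply/disjP=> a; rewrite in_setD => h /andP [h' _].
by rewrite h in h'.
Qed.

Lemma A1 x y : R x y -> cnt M1 x = 0 -> cnt M1 y = 1.
Proof.
move=> Rxy h; have := cnt_match y m1.
case: (eqVneq (cnt M1 y) 0) => [h0|]; last by lia.
by case: (aug1 esym eirr dm mx Rxy h h0).
Qed.

Lemma A2 x y : R x y -> cnt M2 x = 0 -> cnt M2 y = 1.
Proof.
move=> Rxy h; have := cnt_match y m2.
case: (eqVneq (cnt M2 y) 0) => [h0|]; last by lia.
have Rxy' : rest_rel e M2 M1 x y by rewrite Rswap.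
by case: (aug1 esym eirr dm' mx' Rxy' h h0).
Qed.

Lemma F1 x : hd x <= 2 /\ (hd x = 2 -> deg e x = 2 /\ forall y, R x y -> hd y = 1).
Proof.
have dx := L_deg x; have c1 := cnt_match x m1; have c2 := cnt_match x m2.
have := hdeg3 x; have := hdeg2 x => g2 g3.
have hpos : forall y, R x y -> 1 <= hd y by move=> y; rewrite Rsym; apply: hd_pos.
have key3 : ~ 3 <= hd x.
  move=> h.
  have z1 : cnt M1 x = 0 by lia.
  have z2 : cnt M2 x = 0 by lia.
  have [y] : exists y, R x y.
    have : 0 < hd x by lia.
    by rewrite hdR => /card_gt0P [y]; rewrite inE; exists y.
  move=> Rxy.
  have := A1 Rxy z1; have := A2 Rxy z2; have := hpos y Rxy; have := L_deg y; have := hdeg3 y.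
  move=> *; apply: (h33 (rest_e esym eirr Rxy)); lia.
split; first lia.
move=> h2.
have [y [z [yz N]]] : exists y z, y != z /\ [set t | R x t] = [set y; z].
  by apply/cards2P; rewrite -hdR h2.
have Rxy : R x y.
  have : y \in [set t | R x t] by rewrite N !inE eqxx.
  by rewrite inE.
have Rxz : R x z.
  have : z \in [set t | R x t] by rewrite N !inE eqxx orbT.
  by rewrite inE.
case: (eqVneq (deg e x) 3) => d3.
  exfalso.
  have fact : forall t, R x t -> deg e t <= 2.
    move=> t Rxt; have := hdeg3 t; have := h33 (rest_e esym eirr Rxt); lia.
  case: (eqVneq (cnt M1 x) 1) => c.
  - have c2' : cnt M2 x = 0 by lia.
    have ft : forall t, R x t -> cnt M1 t = 0 /\ cnt M2 t = 1.
      move=> t Rxt; have := A2 Rxt c2'; have := fact t Rxt; have := L_deg t; have := hpos t Rxt; lia.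
    have [a1 a2] := ft y Rxy; have [b1 b2] := ft z Rxz.
    exact: (alt_contra esym eirr dm mx yz Rxy Rxz c c2' a1 a2 b1 b2).
  - have c1' : cnt M1 x = 0 by lia.
    have c2' : cnt M2 x = 1 by lia.
    have ft : forall t, R x t -> cnt M2 t = 0 /\ cnt M1 t = 1.
      move=> t Rxt; have := A1 Rxt c1'; have := fact t Rxt; have := L_deg t; have := hpos t Rxt; lia.
    have [a1 a2] := ft y Rxy; have [b1 b2] := ft z Rxz.
    have Rxy' : rest_rel e M2 M1 x y by rewrite Rswap.
    have Rxz' : rest_rel e M2 M1 x z by rewrite Rswap.
    exact: (alt_contra esym eirr dm' mx' yz Rxy' Rxz' c2' c1' a1 a2 b1 b2).
split; first lia.
move=> t Rxt.
have z1 : cnt M1 x = 0 by lia.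
have z2 : cnt M2 x = 0 by lia.
have := A1 Rxt z1; have := A2 Rxt z2; have := hpos t Rxt; have := L_deg t; have := hdeg3 t.
lia.
Qed.


Lemma Rirr x y : R x y -> x != y.
Proof. by move/(rest_e esym eirr)=> h; apply/eqP=> xy; subst; rewrite eirr in h. Qed.

Lemma nbr1 a b t : hd a = 1 -> R a b -> R a t -> t = b.
Proof.
rewrite hdR => /eqP /cards1P [c N] Rab Rat.
have : b \in [set y | R a y] by rewrite inE.
have : t \in [set y | R a y] by rewrite inE.
by rewrite N !inE => /eqP -> /eqP ->.
Qed.

Lemma nbr2 b a c t : hd b = 2 -> R b a -> R b c -> a != c -> R b t -> t = a \/ t = c.
Proof.
rewrite hdR => h Rba Rbc ac Rbt.
have E : [set a; c] = [set y | R b y].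
  apply/eqP; rewrite eqEcard h cards2 ac andbT; apply/subsetP=> y.
  by rewrite !inE => /orP [/eqP->|/eqP->].
have : t \in [set a; c] by rewrite E inE.
by rewrite !inE => /orP [/eqP ->|/eqP ->]; [left|right].
Qed.

Lemma conn_sub (P : {set T}) x t : (forall p q, R p q -> p \in P -> q \in P) ->
  x \in P -> connect R x t -> t \in P.
Proof.
move=> h xP c.
have cl : closed R P.
  move=> p q Rpq; apply/idP/idP; first exact: h.
  by rewrite Rsym in Rpq; apply: h.
by rewrite -(closed_connect cl c).
Qed.

Lemma comp_same x y : connect R x y ->
  [set t | connect R x t] = [set t | connect R y t].
Proof.
have cs : connect_sym R := sym_connect_sym (fun p q => Rsym p q).
move=> c; apply/setP=> t; rewrite !inE; apply/idP/idP => h.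
  by apply: connect_trans _ h; rewrite cs.
exact: connect_trans c h.
Qed.

Lemma P3comp a b c : R b a -> R b c -> a != c -> hd b = 2 ->
  (forall y, R b y -> hd y = 1) ->
  is_path_comp e M1 M2 [set t | connect R b t] [:: a; b; c].
Proof.
move=> Rba Rbc ac hb hn.
have ha := hn a Rba; have hc := hn c Rbc.
have Rab : R a b by rewrite Rsym.
have Rcb : R c b by rewrite Rsym.
have ba := Rirr Rba; have bc := Rirr Rbc.
have nb := nbr2 hb Rba Rbc ac.
have na : forall t, R a t -> t = b := fun t => nbr1 ha Rab.
have nc : forall t, R c t -> t = b := fun t => nbr1 hc Rcb.
have mem3 : forall t, (t \in [set a; b; c]) = [|| t == a, t == b | t == c].
  by move=> t; rewrite !inE ?orbA.
have hC : [set t | connect R b t] = [set a; b; c].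
  apply/setP=> t; rewrite inE; apply/idP/idP => [h|].
  - apply: (conn_sub (P := [set a; b; c])) h; last by rewrite mem3 eqxx orbT.
    move=> p q Rpq; rewrite !mem3 => /or3P [/eqP pa|/eqP pb|/eqP pc]; subst p.
    + by rewrite (na q Rpq) eqxx orbT.
    + by case: (nb q Rpq) => ->; rewrite eqxx ?orbT.
    + by rewrite (nc q Rpq) eqxx orbT.
  - rewrite mem3 => /or3P [/eqP->|/eqP->|/eqP->]; [exact: connect1|exact: connect0|exact: connect1].
split.
- by rewrite /= !inE negb_or eq_sym ba ac bc.
- by rewrite hC; apply/setP=> t; rewrite mem3 !inE.
rewrite hC; apply/setP=> u.
rewrite /comp_edges /path_edges [in LHS]in_set [in RHS]in_set /= !in_cons in_nil orbF.
apply/andP/idP => [[uH usub]|].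
  have uE : u \in edges e by apply: (subsetP (subsetDl _ _) u uH).
  case/edgesP: uE => p [q [epq ue]]; subst u.
  have Rpq : R p q := uH.
  have : p \in [set a; b; c] by apply: (subsetP usub); rewrite !inE eqxx.
  rewrite mem3 => /or3P [/eqP pa|/eqP pb|/eqP pc]; subst p.
  + by rewrite (na q Rpq) eqxx.
  + by case: (nb q Rpq) => ->; rewrite ?eqxx ?orbT // setUC eqxx.
  + by rewrite (nc q Rpq) setUC eqxx orbT.
have sub2 : forall p q, p \in [set a; b; c] -> q \in [set a; b; c] ->
    [set p; q] \subset [set a; b; c].
  by move=> p q hp hq; apply/subsetP=> t; rewrite in_set2 => /orP [/eqP->|/eqP->].
case/orP=> /eqP ->; split.
- exact: Rab.
- by apply: sub2; rewrite mem3 eqxx ?orbT.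
- exact: Rbc.
- by apply: sub2; rewrite mem3 eqxx ?orbT.
Qed.

Lemma P2comp a b : R a b -> hd a = 1 -> hd b = 1 ->
  is_path_comp e M1 M2 [set t | connect R a t] [:: a; b].
Proof.
move=> Rab ha hb.
have Rba : R b a by rewrite Rsym.
have ab := Rirr Rab.
have na : forall t, R a t -> t = b := fun t => nbr1 ha Rab.
have nb : forall t, R b t -> t = a := fun t => nbr1 hb Rba.
have hC : [set t | connect R a t] = [set a; b].
  apply/setP=> t; rewrite inE; apply/idP/idP => [h|].
  - apply: (conn_sub (P := [set a; b])) h; last by rewrite in_set2 eqxx.
    move=> p q Rpq; rewrite !in_set2 => /orP [/eqP pa|/eqP pb]; subst p.
    + by rewrite (na q Rpq) eqxx orbT.
    + by rewrite (nb q Rpq) eqxx.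
  - rewrite in_set2 => /orP [/eqP->|/eqP->]; [exact: connect0|exact: connect1].
split.
- by rewrite /= !inE ab.
- by rewrite hC; apply/setP=> t; rewrite in_set2 !inE ?orbF.
rewrite hC; apply/setP=> u.
rewrite /comp_edges /path_edges [in LHS]in_set [in RHS]in_set /= !in_cons in_nil orbF.
apply/andP/idP => [[uH usub]|].
  have uE : u \in edges e by apply: (subsetP (subsetDl _ _) u uH).
  case/edgesP: uE => p [q [epq ue]]; subst u.
  have Rpq : R p q := uH.
  have : p \in [set a; b] by apply: (subsetP usub); rewrite !inE eqxx.
  rewrite in_set2 => /orP [/eqP pa|/eqP pb]; subst p.
  + by rewrite (na q Rpq) eqxx.
  + by rewrite (nb q Rpq) setUC eqxx.
move=> /eqP ->; split; first exact: Rab.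
by apply/subsetP=> t.
Qed.

Lemma other2 b a : hd b = 2 -> R b a -> exists c, R b c /\ a != c.
Proof.
move=> hb Rba; rewrite hdR in hb; move/eqP/cards2P: hb => [p [q [pq N]]].
have mem : forall t, R b t = (t == p) || (t == q).
  by move=> t; have := f_equal (fun S : {set T} => t \in S) N; rewrite !inE.
move: Rba; rewrite mem => /orP [/eqP ap|/eqP aq].
- by exists q; split; [rewrite mem eqxx orbT | rewrite ap].
- by exists p; split; [rewrite mem eqxx | rewrite aq eq_sym].
Qed.

Lemma final C : C \in rest_comps e M1 M2 ->
    (exists a b, is_path_comp e M1 M2 C [:: a; b]) \/
    (exists a b c, is_path_comp e M1 M2 C [:: a; b; c] /\ deg e b = 2).
Proof.
case/imsetP=> x0; rewrite inE => /existsP [y0 R0] ->.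
have p0 := hd_pos R0.
have [le2 F2] := F1 x0.
case: (eqVneq (hd x0) 2) => h2.
  have [dx nx] := F2 h2.
  have [z [Rz yz]] := other2 h2 R0.
  right; exists y0, x0, z; split=> //.
  by apply: P3comp.
have R0' : R y0 x0 by rewrite Rsym.
have py := hd_pos R0'.
have [le2y F2y] := F1 y0.
case: (eqVneq (hd y0) 2) => hy.
  have [dy ny] := F2y hy.
  have [z [Rz xz]] := other2 hy R0'.
  right; exists x0, y0, z; split=> //.
  rewrite (comp_same (connect1 R0)).
  by apply: P3comp.
left; exists x0, y0; apply: P2comp => //; lia.
Qed.

End Main.

Theorem lemma1 (T : finType) (e : rel T) (M1 M2 : {set {set T}}) :
  simple_graph e ->
  connected_graph e ->
  (forall x, deg e x <= 3) ->
  (forall x, 2 <= deg e x) ->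
  (forall x y, e x y -> ~ (deg e x = 3 /\ deg e y = 3)) ->
  optimal_pair e M1 M2 ->
  forall C, C \in rest_comps e M1 M2 ->
    (exists a b, is_path_comp e M1 M2 C [:: a; b]) \/
    (exists a b c, is_path_comp e M1 M2 C [:: a; b; c] /\ deg e b = 2).
Proof.
move=> [esym eirr] _ hdeg3 hdeg2 h33 [dm mx _] C hC.
exact: (final esym eirr hdeg3 hdeg2 h33 dm mx hC).
Qed.
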